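(* For a graph $G$, let $\widehat G$ denote its full suspension (cone), obtained by adding a new vertex adjacent to every vertex of $G$. Then: (a) for $n\ge 3$, $\widehat{C_n}$ is pseudo-Gorenstein$^{*}$ if and only if $n\equiv 0\pmod{12}$; (b) for $n\ge 1$, $\widehat{P_n}$ is pseudo-Gorenstein$^{*}$ if and only if $n\equiv 1,10\pmod{12}$.
   Context: $C_n$ is the cycle and $P_n$ the path on $n$ vertices. For a finite simple graph $G$ on vertex set $[N]$, let $S=K[x_1,\dots,x_N]$ ($K$ a field) and $I(G)$ the edge ideal generated by $x_ix_j$, $\{i,j\}\in E(G)$. Let $\alpha(G)$ be the independence number (equal to $\dim S/I(G)$). Write the Hilbert series of $S/I(G)$ uniquely as $(h_0+\dots+h_st^s)/(1-t)^{\alpha(G)}$ with $h_s\ne 0$, and $\mathfrak a(G)=s-\alpha(G)$. $G$ is pseudo-Gorenstein$^{*}$ if $h_s=1$ and $\mathfrak a(G)=0$. *)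

(* Defs.v *)
From HB Require Import structures.
From mathcomp Require Import all_boot all_order all_algebra.
Set Implicit Arguments. Unset Strict Implicit. Unset Printing Implicit Defensive.
Import Order.TTheory GRing.Theory Num.Theory.

(* A finite simple graph is given by a finite vertex type T and a symmetric,
   irreflexive adjacency relation e : rel T.  The polynomial ring is
   S = K[x_v : v in T]. *)

Definition independent (T : finType) (e : rel T) (A : {set T}) : bool :=
  [forall x in A, forall y in A, ~~ e x y].

Definition indep_number (T : finType) (e : rel T) : nat :=
  \max_(A : {set T} | independent e A) #|A|.

(* Since I(G) is a monomial
   ideal, the monomials not in I(G) form a K-basis of S/I(G); a monomial
   prod x_v^(f v) of degree k lies outside I(G) iff no edge {x,y} has
   f x > 0 and f y > 0.  Exponents of a degree-k monomial are <= k, so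
   they are encoded as {ffun T -> 'I_k.+1}.  (Independent of the field K.) *)
Definition hilb_fun (T : finType) (e : rel T) (k : nat) : nat :=
  #|[set f : {ffun T -> 'I_k.+1} |
      (\sum_(x : T) (f x : nat) == k) &&
      [forall x, forall y, e x y ==> ((f x : nat) == 0) || ((f y : nat) == 0)]]|.

(* The Hilbert series sum_k H(k) t^k equals h(t)/(1-t)^alpha (alpha = dim S/I(G)
   = independence number) iff, coefficientwise,
   h(t) = (1-t)^alpha * sum_k H(k) t^k.  This is the (unique) numerator. *)
Definition is_hnum (T : finType) (e : rel T) (h : {poly int}) : Prop :=
  forall k : nat,
    (h`_k)%R = (\sum_(i < k.+1)
             ((((1 - 'X) ^+ (indep_number e) : {poly int})`_i)
               * (hilb_fun e (k - i)%N)%:Z)%R)%R.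

(* Pseudo-Gorenstein^*: the numerator h_0 + ... + h_s t^s (h_s <> 0) has
   h_s = 1 and a(G) = s - alpha(G) = 0, i.e. s = alpha(G). *)
Definition pseudo_gorenstein_star (T : finType) (e : rel T) : Prop :=
  exists h : {poly int},
    [/\ is_hnum e h, (size h).-1 = indep_number e & lead_coef h = 1%R].

(* The cycle C_n on vertex set 'I_n (intended for n >= 3). *)
Definition cycle_rel (n : nat) : rel 'I_n :=
  fun i j => (j == i.+1 %% n :> nat) || (i == j.+1 %% n :> nat).

Definition path_rel (n : nat) : rel 'I_n :=
  fun i j => (j == i.+1 :> nat) || (i == j.+1 :> nat).

Definition cone_rel (T : finType) (e : rel T) : rel (option T) :=
  fun x y => match x, y with
             | Some a, Some b => e a b
             | None, Some _ => true
             | Some _, None => true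
             | None, None => false
             end.

Arguments cycle_rel n : clear implicits.
Arguments path_rel n : clear implicits.

(* Main.v *)
Require Import Defs.
From HB Require Import structures.
From mathcomp Require Import all_boot all_order all_algebra.
From mathcomp Require Import zify.
Set Implicit Arguments. Unset Strict Implicit. Unset Printing Implicit Defensive.
Import Order.TTheory GRing.Theory Num.Theory.
Local Open Scope ring_scope.

Definition eqN (N : nat) (p q : {poly int}) := forall i, (i <= N)%N -> p`_i = q`_i.

Lemma eqN_mul N p p' q q' : eqN N p p' -> eqN N q q' -> eqN N (p * q) (p' * q').
Proof.
move=> hp hq i hi; rewrite !coefM; apply: eq_bigr => j _.
have hj : (j <= N)%N by apply: leq_trans hi; rewrite -ltnS.
by rewrite hp // hq //; apply: leq_trans hi; apply: leq_subr.
Qed.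

Lemma eqN_prod N (I : finType) (P : pred I) (F G : I -> {poly int}) :
  (forall i, P i -> eqN N (F i) (G i)) ->
  eqN N (\prod_(i | P i) F i) (\prod_(i | P i) G i).
Proof.
move=> h; apply: (big_ind2 (fun a b => eqN N a b)) => //.
exact: eqN_mul.
Qed.

Definition Sp (k : nat) : {poly int} := \poly_(i < k.+1) ((i != 0)%N%:R).

Lemma Sp_eqN m N : (m <= N)%N -> eqN m (Sp N) (Sp m).
Proof.
move=> hm i hi; rewrite /Sp !coef_poly.
have -> : (i < N.+1)%N by lia.
by have -> : (i < m.+1)%N by lia.
Qed.

Definition suppf (T : finType) k (f : {ffun T -> 'I_k.+1}) : {set T} :=
  [set x | (f x != 0 :> nat)].

Lemma count_lemma (T : finType) k (A : {set T}) :
  (\prod_(x in A) Sp k)`_k =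
  \sum_(f : {ffun T -> 'I_k.+1})
     (((\sum_x (f x : nat) == k)%N && (suppf f == A)) : nat)%:R.
Proof.
have G : forall x, (if x \in A then Sp k else 1) =
   \sum_(i : 'I_k.+1) (if (i != 0 :> nat) == (x \in A) then 'X^i else 0).
  move=> x; rewrite big_ord_recl /=; case: (x \in A) => /=.
    rewrite /Sp poly_def big_ord_recl /= scale0r !add0r.
    by apply: eq_bigr => i _; rewrite scale1r.
  by rewrite big1 ?addr0 ?expr0 // => i _.
rewrite big_mkcond /= (eq_bigr _ (fun x _ => G x)) bigA_distr_bigA coef_sum.
apply: eq_bigr => f _.
case: (boolP (suppf f == A)) => [/eqP hA | hA].
  rewrite (eq_bigr (fun x => 'X^(f x))); last first.
    by move=> x _; rewrite -hA inE eqxx.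
  by rewrite prodrXr coefXn andbT eq_sym.
have : ~~ [forall x, (f x != 0 :> nat) == (x \in A)].
  apply: contra hA => /forallP h; apply/eqP/setP => x; rewrite inE.
  by move: (h x) => /eqP.
case/forallPn => x /negbTE hx.
by rewrite (bigD1 x) //= hx mul0r coef0 andbF.
Qed.

Definition indepP (T : finType) (e : rel T) (A : {set T}) :
  reflect (forall x y, x \in A -> y \in A -> ~~ e x y) (independent e A).
Proof.
apply: (iffP forall_inP) => h x.
  by move=> y hx hy; exact: (forall_inP (h x hx) y hy).
by move=> hx; apply/forall_inP => y hy; exact: h.
Qed.

Lemma edge_indep (T : finType) (e : rel T) k (f : {ffun T -> 'I_k.+1}) :
  [forall x, forall y, e x y ==> ((f x : nat) == 0) || ((f y : nat) == 0)]
  = independent e (suppf f).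
Proof.
apply/forallP/indepP => h.
  move=> x y; rewrite !inE => hx hy; apply/negP => exy.
  have := implyP (forallP (h x) y) exy.
  by rewrite (negbTE hx) (negbTE hy).
move=> x; apply/forallP => y; apply/implyP => exy.
case hx: (f x == 0 :> nat) => //=.
apply/negPn/negP => hy.
have := h x y; rewrite !inE hx hy exy => /(_ isT isT).
done.
Qed.

Lemma hilb_sum (T : finType) (e : rel T) k :
  (hilb_fun e k)%:Z = (\sum_(A | independent e A) \prod_(x in A) Sp k)`_k.
Proof.
rewrite coef_sum (eq_bigr _ (fun A _ => count_lemma k A)) exchange_big /=.
rewrite /hilb_fun -sum1_card.
rewrite (big_mkcond (fun f => f \in _)) /= -natz natr_sum.
apply: eq_bigr => f _.
rewrite inE edge_indep.
set s := (\sum_x _)%N.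
case hI: (independent e (suppf f)).
  rewrite [RHS](bigD1 (suppf f)) //= eqxx andbT big1 ?addr0 //.
  by move=> A /andP[_ hA]; rewrite eq_sym in hA; rewrite (negbTE hA) andbF.
rewrite andbF big1 //= => A hA.
case: (eqVneq (suppf f) A) => [eA|]; last by rewrite andbF.
by rewrite eA hA in hI.
Qed.

Definition hstar (T : finType) (e : rel T) : {poly int} :=
  \sum_(A : {set T} | independent e A)
     ((1 - 'X) ^+ (indep_number e - #|A|) * 'X^#|A|).

Lemma indep_le (T : finType) (e : rel T) A :
  independent e A -> (#|A| <= indep_number e)%N.
Proof.
move=> h; rewrite /indep_number.
exact: (@leq_bigmax_cond _ (fun B : {set T} => independent e B) (fun B : {set T} => #|B|) A h).
Qed.

Lemma key_eqN (T : finType) (e : rel T) N :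
  eqN N ((1 - 'X) ^+ (indep_number e) *
         \sum_(A | independent e A) \prod_(x in A) Sp N) (hstar e).
Proof.
rewrite mulr_sumr => i hi; rewrite !coef_sum; apply: eq_bigr => A hA.
have hle := indep_le hA.
have -> : (1 - 'X) ^+ (indep_number e) =
   (1 - 'X) ^+ (indep_number e - #|A|) * (1 - 'X) ^+ #|A| :> {poly int}.
  by rewrite -exprD subnK.
rewrite -mulrA; apply: (@eqN_mul N _ _ _ _ (fun _ _ => erefl) _ i hi).
rewrite -prodr_const -big_split /= -prodr_const.
apply: eqN_prod => x _ l hl.
rewrite mulrBl mul1r coefB coefXM coefX /Sp !coef_poly.
case: l hl => [|[|l]] hl //=.
  by have -> : (1 < N.+1)%N by lia.
have -> : (l.+1 < N.+1)%N by lia.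
by have -> : (l.+2 < N.+1)%N by lia.
Qed.

Lemma hstar_hnum (T : finType) (e : rel T) : is_hnum e (hstar e).
Proof.
move=> k; rewrite -(@key_eqN T e k k (leqnn k)) coefM.
apply: eq_bigr => i _; congr (_ * _).
rewrite hilb_sum !coef_sum; apply: eq_bigr => A _.
have := @eqN_prod (k - i)%N _ (fun x => x \in A) (fun=> Sp k) (fun=> Sp (k - i)%N).
move=> /(_ (fun x _ => Sp_eqN (leq_subr i k))) /(_ _ (leqnn _)).
by [].
Qed.

Lemma hnum_unique (T : finType) (e : rel T) h : is_hnum e h -> h = hstar e.
Proof. by move=> hh; apply/polyP => k; rewrite hh hstar_hnum. Qed.

Lemma coef_1subX m j :
  ((1 - 'X) ^+ m : {poly int})`_j =
  if (m < j)%N then 0 else if j == m then (-1) ^+ m else ((1 - 'X) ^+ m)`_j.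
Proof.
have E : (1 - 'X) ^+ m = (-1) ^+ m * ('X - 1%:P) ^+ m :> {poly int}.
  by rewrite -exprNn opprB.
have hs := size_exp_XsubC m (1 : int).
have hm : ('X - (1:int)%:P) ^+ m \is monic by apply: monic_exp; apply: monicXsubC.
case: ltnP => hj.
  rewrite E -signr_odd; case: (odd m); rewrite ?expr1 ?expr0 ?mulN1r ?mul1r ?coefN;
  by rewrite nth_default ?oppr0 // hs.
case: eqP => // ->.
rewrite E -signr_odd -[RHS]signr_odd; case: (odd m); rewrite ?expr1 ?expr0 ?mulN1r ?mul1r ?coefN;
  have := monicP hm; rewrite lead_coefE hs /= => -> //.
Qed.

Lemma hstar_coef_gt (T : finType) (e : rel T) j :
  (indep_number e < j)%N -> (hstar e)`_j = 0.
Proof.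
move=> hj; rewrite /hstar coef_sum big1 // => A hA.
have hle := indep_le hA.
rewrite coefMXn ifN; last by rewrite -leqNgt; lia.
by rewrite coef_1subX ifT //; lia.
Qed.

Lemma hstar_coef_alpha (T : finType) (e : rel T) :
  (hstar e)`_(indep_number e) =
  \sum_(A : {set T} | independent e A) (-1) ^+ (indep_number e - #|A|).
Proof.
rewrite /hstar coef_sum; apply: eq_bigr => A hA.
have hle := indep_le hA.
rewrite coefMXn ifN; last by rewrite -leqNgt.
by rewrite coef_1subX ifN ?ltnn // eqxx.
Qed.

Lemma pgs_iff (T : finType) (e : rel T) :
  pseudo_gorenstein_star e <-> (hstar e)`_(indep_number e) = 1.
Proof.
split.
  case=> h [hn hs hl]; rewrite -(hnum_unique hn) -hs -lead_coefE; exact: hl.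
move=> h1; exists (hstar e); split; first exact: hstar_hnum.
  have hle : (size (hstar e) <= (indep_number e).+1)%N.
    by apply/leq_sizeP => j hj; apply: hstar_coef_gt.
  have hge : ((indep_number e).+1 <= size (hstar e))%N.
    rewrite ltnNge; apply/negP => /leq_sizeP /(_ _ (leqnn _)).
    by rewrite h1.
  by have -> : size (hstar e) = (indep_number e).+1 by apply/eqP; rewrite eqn_leq hle hge.
rewrite lead_coefE.
have -> : size (hstar e) = (indep_number e).+1; last by [].
apply/eqP; rewrite eqn_leq; apply/andP; split.
  by apply/leq_sizeP => j hj; apply: hstar_coef_gt.
rewrite ltnNge; apply/negP => /leq_sizeP /(_ _ (leqnn _)).
by rewrite h1.
Qed.

Definition nbh (T : finType) (e : rel T) v : {set T} :=
  v |: [set x | e v x || e x v].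
Definition Eu (T : finType) (e : rel T) (U : {set T}) : int :=
  \sum_(A : {set T} | (A \subset U) && independent e A) (-1) ^+ #|A|.
Definition au (T : finType) (e : rel T) (U : {set T}) : nat :=
  (\max_(A : {set T} | (A \subset U) && independent e A) #|A|)%N.

Lemma indep_sub (T : finType) (e : rel T) (A B : {set T}) :
  A \subset B -> independent e B -> independent e A.
Proof.
move=> /subsetP sAB /indepP h; apply/indepP => x y hx hy.
by apply: h; apply: sAB.
Qed.

Lemma split_big (T : finType) (e : rel T) (U : {set T}) v
   (R : Type) (idx : R) (op : Monoid.com_law idx) (F : {set T} -> R) :
  v \in U -> ~~ e v v ->
  \big[op/idx]_(A : {set T} | (A \subset U) && independent e A) F A =
  op (\big[op/idx]_(A : {set T} | (A \subset U :\ v) && independent e A) F A)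
     (\big[op/idx]_(B : {set T} | (B \subset U :\: nbh e v) && independent e B) F (v |: B)).
Proof.
move=> vU evv.
rewrite (bigID (fun A : {set T} => v \in A)) /= Monoid.mulmC; congr (op _ _).
  apply: eq_bigl => A; rewrite subsetD1.
  by case: (A \subset U); case: (v \in A); case: (independent e A).
rewrite (reindex_onto (fun B => v |: B) (fun A => A :\ v)) /=; last first.
  by move=> A /andP[_ vA]; rewrite setD1K.
apply: eq_bigl => B; apply/idP/idP.
  move=> /andP[/andP[/andP[sU hI] _] /eqP hB].
  have vB : v \notin B by rewrite -hB setD11.
  apply/andP; split; last by apply: indep_sub hI; apply: subsetUr.
  apply/subsetP => x xB.
  have xvB : x \in v |: B by rewrite setU1r.
  rewrite in_setD (subsetP sU x xvB) andbT.
  rewrite !inE negb_or; apply/andP; split.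
    by apply: contraNneq vB => <-.
  have /indepP hI' := hI.
  rewrite negb_or; apply/andP; split.
    by apply: hI'; rewrite ?setU11.
  by apply: hI'; rewrite ?setU11.
move=> /andP[sB hB].
have vB : v \notin B.
  apply/negP => vB; have := subsetP sB v vB.
  by rewrite in_setD /nbh setU11.
rewrite setU11 andbT setU1K // eqxx andbT.
apply/andP; split.
  apply/subsetP => x; rewrite in_setU1 => /orP[/eqP -> //|xB].
  by have := subsetP sB x xB; rewrite in_setD => /andP[].
apply/indepP => x y; rewrite !in_setU1.
move=> /orP[/eqP ->|xB] /orP[/eqP ->|yB] //.
  move: (subsetP sB y yB); rewrite in_setD => /andP[hn _].
  by apply: contra hn => h; rewrite /nbh in_setU1 inE h orbT.
  move: (subsetP sB x xB); rewrite in_setD => /andP[hn _].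
  by apply: contra hn => h; rewrite /nbh in_setU1 inE h !orbT.
by move/indepP: hB; apply.
Qed.

Lemma Eu_split (T : finType) (e : rel T) (U : {set T}) v :
  v \in U -> ~~ e v v ->
  Eu e U = Eu e (U :\ v) - Eu e (U :\: nbh e v).
Proof.
move=> vU evv; rewrite /Eu (split_big _ _ vU evv); congr (_ + _).
rewrite -sumrN; apply: eq_bigr => B /andP[sB _].
have vB : v \notin B.
  apply/negP => vB; have := subsetP sB v vB.
  by rewrite in_setD /nbh setU11.
by rewrite cardsU1 vB exprD expr1 mulN1r.
Qed.

Lemma au_split (T : finType) (e : rel T) (U : {set T}) v :
  v \in U -> ~~ e v v ->
  au e U = maxn (au e (U :\ v)) (au e (U :\: nbh e v)).+1.
Proof.
move=> vU evv; rewrite /au (split_big _ _ vU evv); congr (maxn _ _).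
set P := fun B : {set T} => (B \subset U :\: nbh e v) && independent e B.
have hv : forall B, P B -> #|v |: B| = #|B|.+1.
  move=> B /andP[sB _].
  have vB : v \notin B.
    apply/negP => vB; have := subsetP sB v vB.
    by rewrite in_setD /nbh setU11.
  by rewrite cardsU1 vB.
set M := \big[_/_]_(B | _) #|v |: B|.
have -> : M = (\max_(B | P B) #|v |: B|)%N by [].
apply/eqP; rewrite eqn_leq; apply/andP; split.
  apply/(@bigmax_leqP _ P _ (fun B => #|v |: B|)) => B hB; rewrite hv // ltnS.
  exact: (@leq_bigmax_cond _ P (fun B => #|B|) B hB).
have h0 : P set0 by rewrite /P sub0set; apply/indepP => x y; rewrite inE.
have := @leq_bigmax_cond _ P (fun B => #|v |: B|) set0 h0.
rewrite hv // cards0 => h1.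
set X := (\max_(B | P B) #|v |: B|)%N.
suff H : (\max_(A : {set T} | (A \subset U :\: nbh e v) && independent e A) #|A| <= X.-1)%N by lia.
apply/bigmax_leqP => B hB.
have := @leq_bigmax_cond _ P (fun B => #|v |: B|) B hB.
rewrite hv //; lia.
Qed.

Lemma indep_restrict (T : finType) (e e' : rel T) (U A : {set T}) :
  (forall x y, x \in U -> y \in U -> e x y = e' x y) ->
  A \subset U -> independent e A = independent e' A.
Proof.
move=> h /subsetP sA; apply/indepP/indepP => hi x y hx hy.
  by rewrite -h ?sA //; apply: hi.
by rewrite h ?sA //; apply: hi.
Qed.

Lemma Eu_restrict (T : finType) (e e' : rel T) (U : {set T}) :
  (forall x y, x \in U -> y \in U -> e x y = e' x y) -> Eu e U = Eu e' U.
Proof.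
move=> h; apply: eq_bigl => A.
by case sA: (A \subset U) => //=; apply: indep_restrict sA.
Qed.

Lemma au_restrict (T : finType) (e e' : rel T) (U : {set T}) :
  (forall x y, x \in U -> y \in U -> e x y = e' x y) -> au e U = au e' U.
Proof.
move=> h; apply: eq_bigl => A.
by case sA: (A \subset U) => //=; apply: indep_restrict sA.
Qed.

Lemma Eu_set0 (T : finType) (e : rel T) : Eu e set0 = 1.
Proof.
rewrite /Eu (big_pred1 set0) ?cards0 ?expr0 // => A /=.
rewrite subset0; case: eqP => // ->.
by apply/indepP => x y; rewrite inE.
Qed.

Lemma au_set0 (T : finType) (e : rel T) : au e set0 = 0%N.
Proof.
rewrite /au (big_pred1 set0) ?cards0 // => A /=.
rewrite subset0; case: eqP => // ->.
by apply/indepP => x y; rewrite inE.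
Qed.

Lemma indep_number_au (T : finType) (e : rel T) : indep_number e = au e setT.
Proof. by apply: eq_bigl => A; rewrite subsetT. Qed.

Lemma pgs_iff2 (T : finType) (e : rel T) :
  pseudo_gorenstein_star e <-> (-1) ^+ (au e setT) * Eu e setT = 1.
Proof.
rewrite pgs_iff hstar_coef_alpha -indep_number_au /Eu mulr_sumr.
have -> : \sum_(A : {set T} | independent e A) (-1) ^+ (indep_number e - #|A|) =
   \sum_(A : {set T} | (A \subset setT) && independent e A)
       ((-1) ^+ indep_number e * (-1) ^+ #|A|) :> int.
  apply: eq_big => [A|A hA]; first by rewrite subsetT.
  have hle := indep_le hA.
  by rewrite -signr_odd oddB // signr_addb !signr_odd.
by [].
Qed.

Definition e6 (r : nat) : int :=
  match r with 0 => 1 | 1 => 0 | 2 => -1 | 3 => -1 | 4 => 0 | _ => 1 end.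
Definition epath (m : nat) : int := e6 (m %% 6)%N.

Lemma epath_rec m : epath m.+1 = epath m - epath (m - 1).
Proof.
case: m => [|m]; first by rewrite /epath /= subrr.
rewrite subn1 /= /epath.
have h1 : (m.+1 %% 6 = (m %% 6).+1 %% 6)%N by rewrite -addn1 -modnDml addn1.
have h2 : (m.+2 %% 6 = (m %% 6).+2 %% 6)%N by rewrite -addn2 -modnDml addn2.
rewrite h1 h2.
have : (m %% 6 < 6)%N by apply: ltn_pmod.
by case: (m %% 6)%N => [|[|[|[|[|[|r]]]]]].
Qed.

Lemma Some_ord_eq n (i j : 'I_n) :
  (Some i == Some j) = (nat_of_ord i == nat_of_ord j).
Proof. by []. Qed.

Definition Iv n (a b : nat) : {set option 'I_n} :=
  [set x : option (ordinal n) | if x is Some i then (a <= nat_of_ord i < b)%N else false].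

Lemma Iv_empty n a : Iv n a a = set0.
Proof. by apply/setP => [[i|]]; rewrite !inE //=; lia. Qed.

Lemma path_int n m : forall a, (a + m <= n)%N ->
  Eu (cone_rel (path_rel n)) (Iv n a (a + m)) = epath m /\
  au (cone_rel (path_rel n)) (Iv n a (a + m)) = (m.+1 %/ 2)%N.
Proof.
elim/ltn_ind: m => m IH a ham.
case: m IH ham => [|m] IH ham.
  by rewrite addn0 Iv_empty Eu_set0 au_set0.
have hv : (a + m < n)%N by lia.
set v : option 'I_n := Some (Ordinal hv).
have vU : v \in Iv n a (a + m.+1) by rewrite inE /=; lia.
have evv : ~~ cone_rel (path_rel n) v v by rewrite /= /path_rel /=; lia.
have E1 : Iv n a (a + m.+1) :\ v = Iv n a (a + m).
  apply/setP => [[i|]]; rewrite !inE //=.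
  rewrite /v Some_ord_eq /=; lia.
have E2 : Iv n a (a + m.+1) :\: nbh (cone_rel (path_rel n)) v = Iv n a (a + (m - 1)).
  apply/setP => [[i|]]; rewrite !inE //=.
  rewrite /v Some_ord_eq /= /path_rel /=; lia.
rewrite (Eu_split vU evv) (au_split vU evv) E1 E2.
have [IH1 IH2] := IH m (ltnSn m) a (ltnW hv).
have [IH3 IH4] : Eu (cone_rel (path_rel n)) (Iv n a (a + (m - 1))) = epath (m - 1) /\
  au (cone_rel (path_rel n)) (Iv n a (a + (m - 1))) = ((m - 1).+1 %/ 2)%N.
  by apply: IH; lia.
rewrite IH1 IH2 IH3 IH4 epath_rec; split => //; lia.
Qed.

Lemma cone_split (T : finType) (e : rel T) :
  Eu (cone_rel e) setT = Eu (cone_rel e) (setT :\ None) - 1 /\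
  au (cone_rel e) setT = maxn (au (cone_rel e) (setT :\ None)) 1.
Proof.
have vU : (None : option T) \in setT by rewrite inE.
have evv : ~~ cone_rel e None None by [].
have E : setT :\: nbh (cone_rel e) None = set0.
  by apply/setP => [[i|]]; rewrite !inE /nbh ?in_setU1 ?inE.
by rewrite (Eu_split vU evv) (au_split vU evv) E Eu_set0 au_set0.
Qed.

Lemma Iv_full n : setT :\ None = Iv n 0 (0 + n).
Proof. by apply/setP => [[i|]]; rewrite !inE //= ltn_ord. Qed.

Lemma modS_ord n (i : 'I_n) : (i.+1 %% n = if i.+1 == n then 0 else i.+1)%N.
Proof.
case: eqP => [->|h]; first by rewrite modnn.
by rewrite modn_small //; have := ltn_ord i; lia.
Qed.

Lemma arith_path_b (r : nat) : (r < 12)%N ->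
  ((-1) ^+ (odd (r.+1 %/ 2)%N) * (e6 (r %% 6)%N - 1) == 1 :> int) =
   ((r == 1)%N || (r == 10)%N).
Proof.
by case: r => [|[|[|[|[|[|[|[|[|[|[|[|r]]]]]]]]]]]].
Qed.

Lemma arith_cyc_b (r : nat) : (r < 12)%N ->
  ((-1) ^+ (odd ((r + 3) %/ 2)%N) * (e6 ((r + 2) %% 6)%N - e6 (r %% 6)%N - 1) == 1 :> int) =
   ((r + 3) %% 12 == 0)%N.
Proof.
by case: r => [|[|[|[|[|[|[|[|[|[|[|[|r]]]]]]]]]]]].
Qed.

Lemma red12 q r c : ((q * 12 + r + c) %% 6 = (r + c) %% 6)%N /\
   (odd ((q * 12 + r + c) %/ 2) = odd ((r + c) %/ 2)) /\
   ((q * 12 + r + c) %% 12 = (r + c) %% 12)%N.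
Proof.
split; first by rewrite -addnA (_ : q * 12 = (q * 2) * 6)%N ?modnMDl //; lia.
split; last by rewrite -addnA modnMDl.
rewrite -addnA (_ : q * 12 = (q * 6) * 2)%N; last by lia.
by rewrite divnMDl // oddD oddM andbF.
Qed.

Lemma path_final n : (1 <= n)%N ->
  pseudo_gorenstein_star (cone_rel (path_rel n)) <->
  (n %% 12 = 1 \/ n %% 12 = 10)%N.
Proof.
move=> hn; rewrite pgs_iff2.
have [-> ->] := cone_split (path_rel n).
rewrite Iv_full.
have [-> ->] := path_int (a := 0) (m := n) (leqnn _).
have -> : maxn (n.+1 %/ 2) 1 = (n.+1 %/ 2)%N by lia.
rewrite -signr_odd.
have hr : (n %% 12 < 12)%N by apply: ltn_pmod.
have hq := divn_eq n 12.
have [h1 [h2 h3]] := red12 (n %/ 12) (n %% 12) 1.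
have [h4 [h5 h6]] := red12 (n %/ 12) (n %% 12) 0.
rewrite addn0 -hq in h4 h5 h6.
rewrite addn1 -hq in h1 h2 h3.
rewrite /epath h4 h2 addn0 addn1.
have := arith_path_b hr.
case: eqP => [-> /esym/orP[/eqP->|/eqP->]|hne hb]; first by split => //; left.
  by split => //; right.
split => // -[]/eqP h; by rewrite h ?orbT in hb.
Qed.

Lemma cyc_path_eq n a b : (b < n)%N -> forall x y, x \in Iv n a b -> y \in Iv n a b ->
  cone_rel (cycle_rel n) x y = cone_rel (path_rel n) x y.
Proof.
move=> hb [i|] [j|]; rewrite !inE //= => hi hj.
rewrite /cycle_rel /path_rel !modn_small //; lia.
Qed.

Lemma cycle_final n : (3 <= n)%N ->
  pseudo_gorenstein_star (cone_rel (cycle_rel n)) <-> (n %% 12 = 0)%N.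
Proof.
move=> hn; rewrite pgs_iff2.
have [-> ->] := cone_split (cycle_rel n).
rewrite Iv_full.
have hv : (n - 1 < n)%N by lia.
set v : option 'I_n := Some (Ordinal hv).
have vU : v \in Iv n 0 (0 + n) by rewrite inE /=; lia.
have hmod : ((n - 1).+1 %% n = 0)%N.
  by rewrite (_ : (n - 1).+1 = n)%N ?modnn //; lia.
have evv : ~~ cone_rel (cycle_rel n) v v.
  by rewrite /= /cycle_rel /= hmod; lia.
have E1 : Iv n 0 (0 + n) :\ v = Iv n 0 (0 + (n - 1)).
  apply/setP => [[i|]]; rewrite !inE //=.
  rewrite /v Some_ord_eq /=; have := ltn_ord i; lia.
have E2 : Iv n 0 (0 + n) :\: nbh (cone_rel (cycle_rel n)) v = Iv n 1 (1 + (n - 3)).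
  apply/setP => [[i|]]; rewrite !inE //=.
  rewrite /v Some_ord_eq /= /cycle_rel /= hmod modS_ord /=.
  have := ltn_ord i; case: (@eqP _ i.+1 n) => h; lia.
rewrite (Eu_split vU evv) (au_split vU evv) E1 E2.
rewrite (Eu_restrict (e' := cone_rel (path_rel n)) (cyc_path_eq (a := 0) (b := 0 + (n - 1)) _)); last by lia.
rewrite (Eu_restrict (e' := cone_rel (path_rel n)) (cyc_path_eq (a := 1) (b := 1 + (n - 3)) _)); last by lia.
rewrite (au_restrict (e' := cone_rel (path_rel n)) (cyc_path_eq (a := 0) (b := 0 + (n - 1)) _)); last by lia.
rewrite (au_restrict (e' := cone_rel (path_rel n)) (cyc_path_eq (a := 1) (b := 1 + (n - 3)) _)); last by lia.
have [-> ->] := (@path_int n (n - 1) 0 ltac:(lia)).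
have [-> ->] := (@path_int n (n - 3) 1 ltac:(lia)).
have -> : maxn (maxn ((n - 1).+1 %/ 2) ((n - 3).+1 %/ 2).+1) 1 = (n %/ 2)%N by lia.
rewrite -signr_odd.
set m := (n - 3)%N.
have hnm : n = (m + 3)%N by rewrite /m; lia.
have -> : (n - 1 = m + 2)%N by lia.
rewrite hnm.
have hr : (m %% 12 < 12)%N by apply: ltn_pmod.
have hq := divn_eq m 12.
have [h1 [h2 h3]] := red12 (m %/ 12) (m %% 12) 3.
have [h4 [h5 h6]] := red12 (m %/ 12) (m %% 12) 2.
have [h7 [h8 h9]] := red12 (m %/ 12) (m %% 12) 0.
rewrite -hq in h1 h2 h3 h4 h5 h6.
rewrite addn0 -hq in h7 h8 h9.
rewrite /epath h2 h3 h4 h7 addn0.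
have := arith_cyc_b hr.
case: eqP => [-> /esym/eqP -> //|hne hb].
by split => // /eqP h; rewrite h in hb.
Qed.

Local Close Scope ring_scope.

Theorem theorem5p5 :
  (forall n : nat, 3 <= n ->
     (pseudo_gorenstein_star (cone_rel (cycle_rel n)) <-> n %% 12 = 0))
  /\
  (forall n : nat, 1 <= n ->
     (pseudo_gorenstein_star (cone_rel (path_rel n)) <->
        (n %% 12 = 1 \/ n %% 12 = 10))).
Proof.
split; [exact: cycle_final | exact: path_final].
Qed.
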